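(* Let $X\in\mathbb{R}^{n\times d}$ have zero-mean columns and satisfy $\frac{1}{n}X^\top X=I_d+\rho(\boldsymbol{e}_i\boldsymbol{e}_j^\top+\boldsymbol{e}_j\boldsymbol{e}_i^\top)$ for some indices $i\neq j$ and $0<\rho<1$, where $\boldsymbol{e}_k$ is the $k$-th standard basis vector. Let $Y=X\theta^*+\epsilon$ with $\theta^*\in\mathbb{R}^d$ and $\epsilon\sim\mathcal{N}(0,\sigma I_n)$. Let $\hat\theta$ be the unregularized least squares solution, i.e. $X^\top X\hat\theta=X^\top Y$, and assume $0<\hat\theta_i<\hat\theta_j$. For $\lambda_1>0,\lambda_2>0$ define $$\theta^1=\arg\min_{\theta\in\mathbb{R}^d}\frac{1}{2n}\|X\theta-Y\|_2^2+\lambda_1\|\theta\|_1,\qquad \theta^{\mathrm{El}}=\arg\min_{\theta\in\mathbb{R}^d}\frac{1}{2n}\|X\theta-Y\|_2^2+\lambda_1\|\theta\|_1+\frac{\lambda_2}{2}\|\theta\|_2^2,$$ and let $c=\dfrac{(1+\lambda_2-\rho^2)\hat\theta_i+\lambda_2\rho\hat\theta_j}{1+\lambda_2-\rho}$. Then: (a) if $\lambda_1<(1+\rho)\hat\theta_i$ then $\theta^1_i>0$ and $\theta^1_j>0$; if $(1+\rho)\hat\theta_i\le\lambda_1<\hat\theta_j+\rho\hat\theta_i$ then $\theta^1_i=0$ and $\theta^1_j>0$; if $\lambda_1\ge\hat\theta_j+\rho\hat\theta_i$ then $\theta^1_i=\theta^1_j=0$; (b) if $\lambda_1<c$ then $\theta^{\mathrm{El}}_i>0$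 and $\theta^{\mathrm{El}}_j>0$; if $c\le\lambda_1<\hat\theta_j+\rho\hat\theta_i$ then $\theta^{\mathrm{El}}_i=0$ and $\theta^{\mathrm{El}}_j>0$; if $\lambda_1\ge\hat\theta_j+\rho\hat\theta_i$ then $\theta^{\mathrm{El}}_i=\theta^{\mathrm{El}}_j=0$. *)

(* Defs.v *)
From HB Require Import structures.
From mathcomp Require Import all_boot all_order all_algebra.
From mathcomp Require Import reals.
Set Implicit Arguments. Unset Strict Implicit. Unset Printing Implicit Defensive.
Import Order.TTheory GRing.Theory Num.Theory.
Local Open Scope ring_scope.

Section Objectives.
Variables (R : realType) (n d : nat).

Definition sqnorm2 (m : nat) (v : 'cV[R]_m) : R := \sum_(k < m) (v k 0) ^+ 2.

Definition norm1 (m : nat) (v : 'cV[R]_m) : R := \sum_(k < m) `|v k 0|.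

Definition lasso_obj (X : 'M[R]_(n, d)) (Y : 'cV[R]_n) (lambda1 : R)
  (theta : 'cV[R]_d) : R :=
  (2 * n%:R)^-1 * sqnorm2 (X *m theta - Y) + lambda1 * norm1 theta.

Definition enet_obj (X : 'M[R]_(n, d)) (Y : 'cV[R]_n) (lambda1 lambda2 : R)
  (theta : 'cV[R]_d) : R :=
  (2 * n%:R)^-1 * sqnorm2 (X *m theta - Y) + lambda1 * norm1 theta
  + lambda2 / 2 * sqnorm2 theta.
End Objectives.

Definition is_argmin (R : realType) (d : nat) (f : 'cV[R]_d -> R)
  (theta : 'cV[R]_d) : Prop := forall theta', f theta <= f theta'.

(* Main.v *)
Require Import Defs.
From HB Require Import structures.
From mathcomp Require Import all_boot all_order all_algebra.
From mathcomp Require Import reals.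
From mathcomp Require Import ring lra.
Import Order.TTheory GRing.Theory Num.Theory.
Local Open Scope ring_scope.
Definition hh (R : realFieldType) (lam mu t x : R) : R :=
  2^-1 * (x - t) ^+ 2 + lam * `|x| + mu / 2 * x ^+ 2.

Arguments hh {R}.
Definition g2 (R : realFieldType) (rho mu lam ti tj a b : R) : R :=
  rho * (a - ti) * (b - tj) + hh lam mu ti a + hh lam mu tj b.

Arguments g2 {R}.

Lemma kkt2 (R : realFieldType) (rho mu lam ti tj a b a0 b0 sa sb : R) :
  0 < rho -> rho < 1 -> 0 <= mu -> 0 <= lam -> `|sa| <= 1 -> `|sb| <= 1 ->
  sa * a0 = `|a0| -> sb * b0 = `|b0| ->
  (1 + mu) * a0 - ti + rho * (b0 - tj) + lam * sa = 0 ->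
  (1 + mu) * b0 - tj + rho * (a0 - ti) + lam * sb = 0 ->
  g2 rho mu lam ti tj a b <= g2 rho mu lam ti tj a0 b0 -> a = a0 /\ b = b0.
Proof.
move=> r0 r1 m0 l0 sa1 sb1 ea eb k1 k2.
rewrite /g2 /hh -ea -eb => H.
have hsa : sa * a <= `|a|.
  by rewrite (le_trans (ler_norm _)) // normrM ler_piMl.
have hsb : sb * b <= `|b|.
  by rewrite (le_trans (ler_norm _)) // normrM ler_piMl.
have la : lam * (sa * a) <= lam * `|a| by rewrite ler_wpM2l.
have lb : lam * (sb * b) <= lam * `|b| by rewrite ler_wpM2l.
have e1 : ((1 + mu) * a0 - ti + rho * (b0 - tj) + lam * sa) * (a - a0) = 0.
  by rewrite k1 mul0r.
have e2 : ((1 + mu) * b0 - tj + rho * (a0 - ti) + lam * sb) * (b - b0) = 0.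
  by rewrite k2 mul0r.
have Q : (1 + mu) * ((a - a0) ^+ 2 + (b - b0) ^+ 2) + 2 * rho * (a - a0) * (b - b0) <= 0.
  rewrite -subr_ge0 in H; rewrite -oppr_ge0.
  have -> : - ((1 + mu) * ((a - a0) ^+ 2 + (b - b0) ^+ 2) + 2 * rho * (a - a0) * (b - b0))
    = 2 * (rho * (a0 - ti) * (b0 - tj) + (2^-1 * (a0 - ti) ^+ 2 + lam * (sa * a0) + mu / 2 * a0 ^+ 2) +
        (2^-1 * (b0 - tj) ^+ 2 + lam * (sb * b0) + mu / 2 * b0 ^+ 2) -
        (rho * (a - ti) * (b - tj) + (2^-1 * (a - ti) ^+ 2 + lam * (sa * a) + mu / 2 * a ^+ 2) +
        (2^-1 * (b - tj) ^+ 2 + lam * (sb * b) + mu / 2 * b ^+ 2)))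
      + 2 * (((1 + mu) * a0 - ti + rho * (b0 - tj) + lam * sa) * (a - a0))
      + 2 * (((1 + mu) * b0 - tj + rho * (a0 - ti) + lam * sb) * (b - b0)).
    by field.
  rewrite e1 e2 !mulr0 !addr0; lra.
set x := a - a0 in Q; set y := b - b0 in Q.
have h1 : 0 <= mu * (x ^+ 2 + y ^+ 2) by apply: mulr_ge0 => //; nra.
have h2 : 0 <= rho * (x + y) ^+ 2 by apply: mulr_ge0; [exact: ltW | exact: sqr_ge0].
have h3 : (1 - rho) * (x ^+ 2 + y ^+ 2) <= 0 by lra.
have h4 : x ^+ 2 + y ^+ 2 <= 0.
  by move: h3; rewrite pmulr_rle0 // subr_gt0.
have hx : x = 0 by apply/eqP; rewrite -sqrf_eq0; nra.
have hy : y = 0 by apply/eqP; rewrite -sqrf_eq0; nra.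
by move: hx hy; rewrite /x /y => /eqP; rewrite subr_eq0 => /eqP -> /eqP; rewrite subr_eq0 => /eqP ->.
Qed.

Lemma sa_ok (R : realFieldType) (lam N : R) : 0 < lam -> 0 <= N -> N <= lam -> `|N / lam| <= 1.
Proof.
move=> l0 n0 nl; rewrite ger0_norm; last by rewrite divr_ge0 // ltW.
by rewrite ler_pdivrMr // mul1r.
Qed.

Lemma main2 (R : realFieldType) (rho mu lam ti tj a b : R) :
  0 < rho -> rho < 1 -> 0 <= mu -> 0 < lam -> 0 < ti -> ti < tj ->
  (forall a' b', g2 rho mu lam ti tj a b <= g2 rho mu lam ti tj a' b') ->
  ((lam * (1 + mu - rho) < (1 + mu - rho ^+ 2) * ti + mu * rho * tj -> 0 < a /\ 0 < b) /\
   ((1 + mu - rho ^+ 2) * ti + mu * rho * tj <= lam * (1 + mu - rho) ->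
      lam < tj + rho * ti -> a = 0 /\ 0 < b) /\
   (tj + rho * ti <= lam -> a = 0 /\ b = 0)).
Proof.
move=> r0 r1 m0 l0 t0 tij Hmin.
have lne : lam != 0 by rewrite gt_eqF.
have m1 : 0 < 1 + mu by lra.
have m1ne : 1 + mu != 0 by rewrite gt_eqF.
split; [|split].
- move=> Hc.
  set D := (1 + mu) ^+ 2 - rho ^+ 2.
  have D0 : 0 < D by rewrite /D; nra.
  have Dne : D != 0 by rewrite gt_eqF.
  set u := ti + rho * tj - lam; set v := tj + rho * ti - lam.
  set a0 := ((1 + mu) * u - rho * v) / D.
  set b0 := ((1 + mu) * v - rho * u) / D.
  have na : 0 < (1 + mu) * u - rho * v by rewrite /u /v; lra.
  have nb : 0 < (1 + mu) * v - rho * u.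
    have : 0 < (tj - ti) * ((1 - rho) * (1 + rho + mu)).
      apply: mulr_gt0; first lra. apply: mulr_gt0; lra.
    rewrite /u /v; nra.
  have a00 : 0 < a0 by rewrite divr_gt0.
  have b00 : 0 < b0 by rewrite divr_gt0.
  have [-> ->] : a = a0 /\ b = b0.
    apply: (@kkt2 _ rho mu lam ti tj a b a0 b0 1 1) => //; try lra.
    + by rewrite normr1.
    + by rewrite normr1.
    + by rewrite mul1r gtr0_norm.
    + by rewrite mul1r gtr0_norm.
    + rewrite /a0 /b0 /u /v /D; field; exact: Dne.
    + rewrite /a0 /b0 /u /v /D; field; exact: Dne.
  by [].
- move=> Hc Hl.
  set v := tj + rho * ti - lam.
  set b0 := v / (1 + mu).
  set N := ti - rho * (b0 - tj).
  have hN : (1 + mu) * N = (1 + mu - rho ^+ 2) * ti + rho * lam + rho * mu * tj.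
    rewrite /N /b0 /v; field; exact: m1ne.
  have N0 : 0 <= N.
    have : 0 <= (1 + mu) * N.
      have r2 : 0 < 1 + mu - rho ^+ 2 by nra.
      rewrite hN; apply: addr_ge0; first apply: addr_ge0.
      * by apply: mulr_ge0; apply: ltW.
      * by apply: mulr_ge0; apply: ltW.
      * by apply: mulr_ge0; [apply: mulr_ge0 => //; apply: ltW|lra].
    by rewrite pmulr_rge0.
  have Nl : N <= lam.
    have : (1 + mu) * N <= (1 + mu) * lam by rewrite hN; nra.
    by rewrite ler_pM2l.
  have b00 : 0 < b0 by rewrite divr_gt0 // /v; lra.
  have [-> ->] : a = 0 /\ b = b0.
    apply: (@kkt2 _ rho mu lam ti tj a b 0 b0 (N / lam) 1) => //; try lra.
    + exact: sa_ok.
    + by rewrite normr1.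
    + by rewrite mulr0 normr0.
    + by rewrite mul1r gtr0_norm.
    + rewrite /N; field; exact: lne.
    + rewrite /b0 /v; field; exact: m1ne.
  by [].
- move=> Hl.
  have [-> ->] : a = 0 /\ b = 0.
    apply: (@kkt2 _ rho mu lam ti tj a b 0 0 ((ti + rho * tj) / lam) ((tj + rho * ti) / lam)) => //; try lra.
    + apply: sa_ok => //; nra.
    + apply: sa_ok => //; nra.
    + by rewrite mulr0 normr0.
    + by rewrite mulr0 normr0.
    + field; exact: lne.
    + field; exact: lne.
  by [].
Qed.


Lemma sq_tr (R : realType) (m : nat) (v : 'cV[R]_m) : sqnorm2 v = (v^T *m v) 0 0.
Proof. rewrite /sqnorm2 mxE; by apply: eq_bigr => k _; rewrite !mxE expr2. Qed.

Lemma quad_delta (R : realType) (m : nat) (u v : 'cV[R]_m) (i j : 'I_m) :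
  (u^T *m delta_mx i j *m v) 0 0 = u i 0 * v j 0.
Proof.
rewrite -(mul_delta_mx (0 : 'I_1)) mulmxA -colE -mulmxA -rowE.
rewrite mxE big_ord1 !mxE.
by [].
Qed.

Lemma expand (R : realType) (n d : nat) (X : 'M[R]_(n, d)) (w : 'cV[R]_d) (r : 'cV[R]_n) :
  X^T *m r = 0 -> sqnorm2 (X *m w + r) = (w^T *m (X^T *m X) *m w) 0 0 + sqnorm2 r.
Proof.
move=> H; have tD : (X *m w + r)^T = (X *m w)^T + r^T by apply/matrixP => a b; rewrite !mxE.
rewrite !sq_tr tD trmx_mul mulmxDl !mulmxDr.
have -> : w^T *m X^T *m r = 0 by rewrite -mulmxA H mulmx0.
have -> : r^T *m (X *m w) = 0 by rewrite mulmxA -(trmxK X) -trmx_mul H trmx0 mul0mx.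
by rewrite !mulmxA addr0 add0r mxE.
Qed.

Lemma quadG (R : realType) (d : nat) (w : 'cV[R]_d) (i j : 'I_d) (c rho : R) :
  (w^T *m (c *: (1%:M + rho *: (delta_mx i j + delta_mx j i))) *m w) 0 0
  = c * (sqnorm2 w + rho * (w i 0 * w j 0 + w j 0 * w i 0)).
Proof.
have E : w^T *m (c *: (1%:M + rho *: (delta_mx i j + delta_mx j i))) *m w
  = c *: (w^T *m w + rho *: (w^T *m delta_mx i j *m w + w^T *m delta_mx j i *m w)).
  rewrite -scalemxAr -scalemxAl mulmxDr mulmx1 -scalemxAr mulmxDr.
  by rewrite mulmxDl -scalemxAl mulmxDl.
rewrite E.
have F : forall A B C : 'M[R]_1, (c *: (A + rho *: (B + C))) 0 0 = c * (A 0 0 + rho * (B 0 0 + C 0 0)).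
  by move=> A B C; rewrite !mxE.
rewrite F !quad_delta sq_tr.
by [].
Qed.

Lemma decomp (R : realType) (n d : nat) (X : 'M[R]_(n, d)) (Y : 'cV[R]_n)
  (th : 'cV[R]_d) (i j : 'I_d) (rho lam mu : R) (t : 'cV[R]_d) :
  n%:R != 0 :> R ->
  X^T *m X = n%:R *: (1%:M + rho *: (delta_mx i j + delta_mx j i)) ->
  X^T *m X *m th = X^T *m Y ->
  lasso_obj X Y lam t + mu / 2 * sqnorm2 t =
  (2 * n%:R)^-1 * sqnorm2 (X *m th - Y) + rho * (t i 0 - th i 0) * (t j 0 - th j 0)
  + \sum_k hh lam mu (th k 0) (t k 0).
Proof.
move=> n0 HG Hn.
rewrite /lasso_obj.
have -> : X *m t - Y = X *m (t - th) + (X *m th - Y) by rewrite mulmxBr addrA subrK.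
rewrite expand; last by rewrite mulmxBr mulmxA Hn subrr.
rewrite HG quadG.
have -> : \sum_k hh lam mu (th k 0) (t k 0)
   = 2^-1 * sqnorm2 (t - th) + lam * norm1 t + mu / 2 * sqnorm2 t.
  rewrite /sqnorm2 /norm1 !mulr_sumr -!big_split; apply: eq_bigr => k _.
  by rewrite /hh !mxE.
rewrite !mxE.
field; exact: n0.
Qed.

Lemma reduce (R : realType) (d : nat) (F : 'cV[R]_d -> R) (th t1 : 'cV[R]_d) (i j : 'I_d)
  (rho mu lam K : R) :
  i != j ->
  (forall t, F t = K + rho * (t i 0 - th i 0) * (t j 0 - th j 0)
                   + \sum_k hh lam mu (th k 0) (t k 0)) ->
  is_argmin F t1 ->
  forall a' b', g2 rho mu lam (th i 0) (th j 0) (t1 i 0) (t1 j 0)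
                <= g2 rho mu lam (th i 0) (th j 0) a' b'.
Proof.
move=> ij HF Hmin a' b'.
pose t' : 'cV[R]_d := \col_k (if k == i then a' else if k == j then b' else t1 k 0).
have := Hmin t'; rewrite !HF.
have sp : forall t : 'cV[R]_d, \sum_k hh lam mu (th k 0) (t k 0)
   = hh lam mu (th i 0) (t i 0) + hh lam mu (th j 0) (t j 0)
     + \sum_(k | (k != i) && (k != j)) hh lam mu (th k 0) (t k 0).
  move=> t; rewrite (bigD1 i) //= (bigD1 j) /=; last by rewrite eq_sym.
  by rewrite addrA.
rewrite !sp.
have -> : \sum_(k | (k != i) && (k != j)) hh lam mu (th k 0) (t' k 0)
        = \sum_(k | (k != i) && (k != j)) hh lam mu (th k 0) (t1 k 0).
  apply: eq_bigr => k /andP[/negbTE ki /negbTE kj].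
  by rewrite /t' mxE ki kj.
have -> : t' i 0 = a' by rewrite /t' mxE eqxx.
have -> : t' j 0 = b' by rewrite /t' mxE eq_sym (negbTE ij) eqxx.
rewrite /g2; lra.
Qed.

Theorem proposition5p1 (R : realType) (n d : nat) (X : 'M[R]_(n, d))
  (i j : 'I_d) (rho : R) (theta_star : 'cV[R]_d) (eps : 'cV[R]_n)
  (Y : 'cV[R]_n) (theta_hat : 'cV[R]_d) (lambda1 lambda2 : R)
  (theta1 thetaEl : 'cV[R]_d) :
  (forall k : 'I_d, \sum_(r < n) X r k = 0) ->
  i != j -> 0 < rho -> rho < 1 ->
  (n%:R)^-1 *: (X^T *m X) = 1%:M + rho *: (delta_mx i j + delta_mx j i) ->
  Y = X *m theta_star + eps ->
  X^T *m X *m theta_hat = X^T *m Y ->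
  0 < theta_hat i 0 -> theta_hat i 0 < theta_hat j 0 ->
  0 < lambda1 -> 0 < lambda2 ->
  is_argmin (lasso_obj X Y lambda1) theta1 ->
  is_argmin (enet_obj X Y lambda1 lambda2) thetaEl ->
  let ti := theta_hat i 0 in
  let tj := theta_hat j 0 in
  let c := ((1 + lambda2 - rho ^+ 2) * ti + lambda2 * rho * tj)
           / (1 + lambda2 - rho) in
  ((lambda1 < (1 + rho) * ti -> 0 < theta1 i 0 /\ 0 < theta1 j 0) /\
   ((1 + rho) * ti <= lambda1 -> lambda1 < tj + rho * ti ->
      theta1 i 0 = 0 /\ 0 < theta1 j 0) /\
   (tj + rho * ti <= lambda1 -> theta1 i 0 = 0 /\ theta1 j 0 = 0)) /\
  ((lambda1 < c -> 0 < thetaEl i 0 /\ 0 < thetaEl j 0) /\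
   (c <= lambda1 -> lambda1 < tj + rho * ti ->
      thetaEl i 0 = 0 /\ 0 < thetaEl j 0) /\
   (tj + rho * ti <= lambda1 -> thetaEl i 0 = 0 /\ thetaEl j 0 = 0)).

Proof.
move=> _ ij r0 r1 HG1 _ Hn ti0 tij l10 l20 Hl Hel ti tj c.
have n0 : n%:R != 0 :> R.
  apply/negP => /eqP n0; move: HG1; rewrite n0 invr0 scale0r => /(congr1 (fun M : 'M[R]_d => M i i)).
  rewrite !mxE eqxx (negbTE ij) /= addr0 mulr0 addr0 => /eqP; rewrite eq_sym oner_eq0.
  by [].
have HG : X^T *m X = n%:R *: (1%:M + rho *: (delta_mx i j + delta_mx j i)).
  by rewrite -HG1 scalerA mulfV // scale1r.
have HL := @reduce R d (lasso_obj X Y lambda1) theta_hat theta1 i j rho 0 lambda1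
   ((2 * n%:R)^-1 * sqnorm2 (X *m theta_hat - Y)) ij.
have HL' : forall a' b', g2 rho 0 lambda1 (theta_hat i 0) (theta_hat j 0) (theta1 i 0) (theta1 j 0)
    <= g2 rho 0 lambda1 (theta_hat i 0) (theta_hat j 0) a' b'.
  apply: HL Hl => t.
  by have := @decomp R n d X Y theta_hat i j rho lambda1 0 t n0 HG Hn; rewrite !mul0r addr0.
have HE := @reduce R d (enet_obj X Y lambda1 lambda2) theta_hat thetaEl i j rho lambda2 lambda1
   ((2 * n%:R)^-1 * sqnorm2 (X *m theta_hat - Y)) ij
   (fun t => @decomp R n d X Y theta_hat i j rho lambda1 lambda2 t n0 HG Hn) Hel.
have := @main2 _ _ _ _ _ _ _ _ r0 r1 (lexx 0) l10 ti0 tij HL'.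
have := @main2 _ _ _ _ _ _ _ _ r0 r1 (ltW l20) l10 ti0 tij HE.
rewrite -/ti -/tj.
move=> [E1 [E2 E3]] [L1 [L2 L3]].
have hc : 0 < 1 + lambda2 - rho by lra.
split; split; [|split| |split].
- move=> h; apply: L1.
  have : 0 < (1 - rho) * ((1 + rho) * ti - lambda1) by apply: mulr_gt0; lra.
  lra.
- move=> h h'; apply: L2 => //.
  have : 0 <= (1 - rho) * (lambda1 - (1 + rho) * ti) by apply: mulr_ge0; lra.
  lra.
- exact: L3.
- by move=> h; apply: E1; move: h; rewrite /c ltr_pdivlMr // mulrC.
- by move=> h; apply: E2; move: h; rewrite /c ler_pdivrMr // mulrC.
- exact: E3.
Qed.
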